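(* Let $d_1,d_2\ge1$, $p_{i0}<\cdots<p_{id_i}$ reals, $f_i:\{p_{i0},\dots,p_{id_i}\}\to\mathbb{R}$ ($i=1,2$). Let $\sigma,\tau$, $\psi^\sigma,\psi^\tau$, $N=d_1+d_2$ be as follows: $\sigma_i$ a permutation of $\{0,\dots,d_i\}$ with $f_i(p_{i,\sigma_i(0)})\le\cdots\le f_i(p_{i,\sigma_i(d_i)})$ ($i=1,2$); $\tau_1,\tau_2$ permutations with $f_1(p_{1,\tau_1(0)})\le\cdots\le f_1(p_{1,\tau_1(d_1)})$ and $f_2(p_{2,\tau_2(0)})\ge\cdots\ge f_2(p_{2,\tau_2(d_2)})$; $\psi^\sigma(\boldsymbol{j})=f_1(p_{1,\sigma_1(j_1)})f_2(p_{2,\sigma_2(j_2)})$, $\psi^\tau(\boldsymbol{j})=f_1(p_{1,\tau_1(j_1)})f_2(p_{2,\tau_2(j_2)})$. For $i=1,2$ let $\boldsymbol{\eta}^0_i,\dots,\boldsymbol{\eta}^{d_i}_i$ be distinct vectors in $\{0,1\}^{K_i}$, $K_i=\lceil\log_2(d_i+1)\rceil$, and $A_{ik}=\{t\in\{0,\dots,d_i\}:\eta^t_{ik}=1\}$. Then the set of $(\boldsymbol{x},\boldsymbol{z},\mu,\boldsymbol{\delta})$ satisfying, for $i=1,2$: $\boldsymbol{z}_i\in\Delta^{d_i}$, $\boldsymbol{\delta}_i\in\{0,1\}^{K_i}$, $\sum_{j\in A_{ik}}(z_{ij}-z_{i,j+1})\le\delta_{ik}$ and $\sum_{j\in\{0,\dots,d_i\}\setminus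 A_{ik}}(z_{ij}-z_{i,j+1})\le1-\delta_{ik}$ for $k=1,\dots,K_i$ (with $z_{i0}=1$, $z_{i,d_i+1}=0$), $(x_i,\boldsymbol{z}_i)\in B_i$; together with $\boldsymbol{z}'=(L^\sigma)^{-1}(\boldsymbol{z})$, $\boldsymbol{z}''=(L^\tau)^{-1}(\boldsymbol{z})$ and, for all $\pi\in\Pi$, $$\mu\le\psi^\sigma(\boldsymbol{j}^0)+\sum_{t\in[N]}(\psi^\sigma(\boldsymbol{j}^t)-\psi^\sigma(\boldsymbol{j}^{t-1}))z'_{\pi_t},\qquad\mu\ge\psi^\tau(\boldsymbol{j}^0)+\sum_{t\in[N]}(\psi^\tau(\boldsymbol{j}^t)-\psi^\tau(\boldsymbol{j}^{t-1}))z''_{\pi_t},$$ is an ideal MIP formulation (with binary variables $\boldsymbol{\delta}$ only) of $\{(\boldsymbol{x},\mu):\mu=f_1(x_1)f_2(x_2),\ x_i\in\{p_{i0},\dots,p_{id_i}\},\ i=1,2\}$.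
   Context: $\Delta^d=\{\boldsymbol{z}\in\mathbb{R}^d:1\ge z_1\ge\cdots\ge z_d\ge0\}$; $\boldsymbol{z}=(\boldsymbol{z}_1,\boldsymbol{z}_2)$. $B_i=\{(x_i,\boldsymbol{z}_i):x_i=p_{i0}+\sum_{j\in[d_i]}(p_{ij}-p_{i,j-1})z_{ij},\ \boldsymbol{z}_i\in\Delta^{d_i}\}$. Staircases: $\pi=(\pi_1,\dots,\pi_N)$, $\pi_t=(\pi_t(1),\pi_t(2))$, $\pi_t(1)\in\{1,2\}$ with $i$ occurring exactly $d_i$ times, $\pi_t(2)=|\{s\le t:\pi_s(1)=\pi_t(1)\}|$; $\Pi$ = set of staircases; $z_{\pi_t}=z_{\pi_t(1),\pi_t(2)}$; $\boldsymbol{j}^0=(0,0)$, $\boldsymbol{j}^t=\boldsymbol{j}^{t-1}+\boldsymbol{e}_{\pi_t(1)}$. For permutations $\rho_i$ of $\{0,\dots,d_i\}$: $T_i(\boldsymbol{z}_i)=\boldsymbol{\lambda}_i$ with $\lambda_{ij}=z_{ij}-z_{i,j+1}$, $j=0,\dots,d_i$ ($z_{i0}=1,z_{i,d_i+1}=0$), $T_i^{-1}:z_{ij}=\sum_{k\ge j}\lambda_{ik}$; $P^{\rho_i}$ permutation matrix with $(j,k)$ entry $1$ iff $j=\rho_i(k)$; $L^{\rho_i}=T_i^{-1}\circ P^{\rho_i}\circ T_i$, $L^\rho=(L^{\rho_1},L^{\rho_2})$. An MIP formulation of $S$: polyhedron plus binary restrictions whose projection on original variables is $S$; ideal: every vertex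 of the LP relaxation has the binary-restricted variables binary. *)

(* Defs.v *)
From HB Require Import structures.
From mathcomp Require Import all_boot all_order all_algebra all_fingroup.
From mathcomp Require Import reals.
Set Implicit Arguments. Unset Strict Implicit. Unset Printing Implicit Defensive.
Import Order.TTheory GRing.Theory Num.Theory.
Local Open Scope ring_scope.

Section Defs.
Variable R : realType.

(* z : 'rV_d encodes (z_1,...,z_d); zext z j = z_j with the conventions
   z_0 = 1 and z_j = 0 for j > d (in particular z_{d+1} = 0). *)
Definition zext (d : nat) (z : 'rV[R]_d) (j : nat) : R :=
  nth 0 (1 :: [seq z ord0 i | i <- enum 'I_d]) j.

Definition inDelta (d : nat) (z : 'rV[R]_d) : Prop :=
  forall j : nat, (j <= d)%N -> zext z j.+1 <= zext z j.

Definition Tmap (d : nat) (z : 'rV[R]_d) : 'I_d.+1 -> R :=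
  fun j => zext z j - zext z j.+1.

Definition Tinv (d : nat) (lam : 'I_d.+1 -> R) : 'rV[R]_d :=
  \row_(j < d) \sum_(k < d.+1 | (j.+1 <= k)%N) lam k.

Definition Pmap (d : nat) (rho : {perm 'I_d.+1}) (lam : 'I_d.+1 -> R)
  : 'I_d.+1 -> R :=
  fun j => \sum_(k < d.+1) (if j == rho k then 1 else 0) * lam k.

Definition Lmap (d : nat) (rho : {perm 'I_d.+1}) (z : 'rV[R]_d) : 'rV[R]_d :=
  Tinv (Pmap rho (Tmap z)).

Definition inB (d : nat) (p : 'I_d.+1 -> R) (x : R) (z : 'rV[R]_d) : Prop :=
  x = p ord0 + \sum_(j < d) (p (inord j.+1) - p (inord j)) * z ord0 j
  /\ inDelta z.

(* Staircases: a sequence pi over 'I_2 (0 stands for coordinate 1,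
   1 for coordinate 2) in which coordinate i occurs exactly d_i times. *)
Definition staircase (d1 d2 : nat) (pi : seq 'I_2) : Prop :=
  count (pred1 0) pi = d1 /\ count (pred1 1) pi = d2.

Definition jvec (pi : seq 'I_2) (t : nat) : nat * nat :=
  (count (pred1 0) (take t pi), count (pred1 1) (take t pi)).

Definition psi (d1 d2 : nat) (f1 f2 : R -> R)
  (p1 : 'I_d1.+1 -> R) (p2 : 'I_d2.+1 -> R)
  (r1 : {perm 'I_d1.+1}) (r2 : {perm 'I_d2.+1}) (j : nat * nat) : R :=
  f1 (p1 (r1 (inord j.1))) * f2 (p2 (r2 (inord j.2))).

(* z_{pi_t} = z_{pi_t(1), pi_t(2)}; note pi_t(2) = (j^t)_{pi_t(1)} *)
Definition zpi (d1 d2 : nat) (z1 : 'rV[R]_d1) (z2 : 'rV[R]_d2)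
  (pi : seq 'I_2) (t : nat) : R :=
  if nth 0 pi t.-1 == 0 then zext z1 (jvec pi t).1 else zext z2 (jvec pi t).2.

Definition stair_sum (ps : nat * nat -> R) (d1 d2 : nat)
  (z1 : 'rV[R]_d1) (z2 : 'rV[R]_d2) (pi : seq 'I_2) : R :=
  ps (jvec pi 0) +
  \sum_(t < size pi) (ps (jvec pi t.+1) - ps (jvec pi t)) * zpi z1 z2 pi t.+1.

Definition enc_ok (d K : nat) (eta : 'I_d.+1 -> 'I_K -> bool)
  (z : 'rV[R]_d) (del : 'rV[R]_K) : Prop :=
  forall k : 'I_K,
    \sum_(j < d.+1 | eta j k) (zext z j - zext z j.+1) <= del ord0 k /\
    \sum_(j < d.+1 | ~~ eta j k) (zext z j - zext z j.+1) <= 1 - del ord0 k.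

Record point (d1 d2 K1 K2 : nat) := Point {
  px1 : R; px2 : R; pz1 : 'rV[R]_d1; pz2 : 'rV[R]_d2; pmu : R;
  pdel1 : 'rV[R]_K1; pdel2 : 'rV[R]_K2 }.

Definition pcomb (d1 d2 K1 K2 : nat) (t : R) (a b : point d1 d2 K1 K2) :=
  Point (t * px1 a + (1 - t) * px1 b) (t * px2 a + (1 - t) * px2 b)
        (t *: pz1 a + (1 - t) *: pz1 b) (t *: pz2 a + (1 - t) *: pz2 b)
        (t * pmu a + (1 - t) * pmu b)
        (t *: pdel1 a + (1 - t) *: pdel1 b) (t *: pdel2 a + (1 - t) *: pdel2 b).

Definition extreme_point (d1 d2 K1 K2 : nat)
  (S : point d1 d2 K1 K2 -> Prop) (v : point d1 d2 K1 K2) : Prop :=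
  S v /\ forall (a b : point d1 d2 K1 K2) (t : R),
    S a -> S b -> 0 < t < 1 -> v = pcomb t a b -> a = b.

Definition binary_row (K : nat) (del : 'rV[R]_K) : Prop :=
  forall k : 'I_K, del ord0 k = 0 \/ del ord0 k = 1.

Definition unit_row (K : nat) (del : 'rV[R]_K) : Prop :=
  forall k : 'I_K, 0 <= del ord0 k <= 1.

(* The LP relaxation (polyhedron) of the formulation of Corollary 1:
   delta in [0,1]^K instead of {0,1}^K. *)
Definition relaxation (d1 d2 : nat) (p1 : 'I_d1.+1 -> R) (p2 : 'I_d2.+1 -> R)
  (f1 f2 : R -> R) (s1 : {perm 'I_d1.+1}) (s2 : {perm 'I_d2.+1})
  (t1 : {perm 'I_d1.+1}) (t2 : {perm 'I_d2.+1})
  (K1 K2 : nat) (eta1 : 'I_d1.+1 -> 'I_K1 -> bool) (eta2 : 'I_d2.+1 -> 'I_K2 -> bool)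
  (v : point d1 d2 K1 K2) : Prop :=
  [/\ inB p1 (px1 v) (pz1 v) /\ inB p2 (px2 v) (pz2 v),
      unit_row (pdel1 v) /\ unit_row (pdel2 v),
      enc_ok eta1 (pz1 v) (pdel1 v) /\ enc_ok eta2 (pz2 v) (pdel2 v),
      (exists (z1' : 'rV[R]_d1) (z2' : 'rV[R]_d2),
         Lmap s1 z1' = pz1 v /\ Lmap s2 z2' = pz2 v /\
         forall pi, staircase d1 d2 pi ->
           pmu v <= stair_sum (psi f1 f2 p1 p2 s1 s2) z1' z2' pi) &
      (exists (z1'' : 'rV[R]_d1) (z2'' : 'rV[R]_d2),
         Lmap t1 z1'' = pz1 v /\ Lmap t2 z2'' = pz2 v /\
         forall pi, staircase d1 d2 pi ->
           pmu v >= stair_sum (psi f1 f2 p1 p2 t1 t2) z1'' z2'' pi)].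

End Defs.

(* Main.v *)
Require Import Defs.
From HB Require Import structures.
From mathcomp Require Import all_boot all_order all_algebra all_fingroup.
From mathcomp Require Import reals.
From mathcomp Require Import ring lra.
Import Order.TTheory GRing.Theory Num.Theory.
Local Open Scope ring_scope.
Set Implicit Arguments. Unset Strict Implicit. Unset Printing Implicit Defensive.

Section A.
Variable R : realType.

Lemma zextS_lt d (z : 'rV[R]_d) j (hj : (j < d)%N) :
  zext z j.+1 = z ord0 (Ordinal hj).
Proof.
rewrite /zext /= (nth_map (Ordinal hj)); last by rewrite size_enum_ord.
congr (z _ _); apply/val_inj; rewrite /= nth_enum_ord //.
Qed.

Lemma zextS_ge d (z : 'rV[R]_d) j : (d <= j)%N -> zext z j.+1 = 0.
Proof.
by move=> hj; rewrite /zext /= nth_default // size_map size_enum_ord.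
Qed.

Lemma zext0 d (z : 'rV[R]_d) : zext z 0 = 1.
Proof. by []. Qed.

Lemma zext_ord d (z : 'rV[R]_d) (j : 'I_d) : zext z j.+1 = z ord0 j.
Proof. by rewrite (zextS_lt z (ltn_ord j)); congr (z _ _); apply/val_inj. Qed.

Lemma zext_big d (z : 'rV[R]_d) j : (d < j)%N -> zext z j = 0.
Proof. by case: j => // j hj; rewrite zextS_ge. Qed.

Lemma zext_inj d (a b : 'rV[R]_d) : (forall j, zext a j = zext b j) -> a = b.
Proof. by move=> h; apply/rowP => j; rewrite -!zext_ord h. Qed.

Definition vz d (a : 'I_d.+1) : 'rV[R]_d := \row_(j < d) ((j < a)%N)%:R.

Lemma zext_vz d (a : 'I_d.+1) m : zext (vz a) m = ((m <= a)%N)%:R.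
Proof.
case: m => // m; case: (ltnP m d) => hm.
  by rewrite (zextS_lt _ hm) mxE.
by rewrite zextS_ge // leqNgt ltnS (leq_trans _ hm) // -ltnS ltn_ord.
Qed.

Definition lam d (z : 'rV[R]_d) (j : nat) := zext z j - zext z j.+1.

Lemma sum_ge_split d (F : nat -> R) (j : nat) : (j <= d)%N ->
  \sum_(k < d.+1 | (j <= k)%N) F k = F j + \sum_(k < d.+1 | (j.+1 <= k)%N) F k.
Proof.
move=> hj; rewrite (bigD1 (Ordinal (hj : (j < d.+1)%N))) //=; congr (_ + _).
by apply: eq_bigl => k; rewrite ltn_neqAle andbC eq_sym -val_eqE.
Qed.

Lemma zext_lam d (z : 'rV[R]_d) j :
  zext z j = \sum_(k < d.+1 | (j <= k)%N) lam z k.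
Proof.
have [hj|hj] := leqP j d.+1; last first.
  rewrite zext_big ?big_pred0 //; first by move=> k; rewrite leqNgt (ltn_trans _ hj).
  by rewrite ltnW.
have key : forall n, (n <= d.+1)%N ->
    zext z (d.+1 - n) = \sum_(k < d.+1 | (d.+1 - n <= k)%N) lam z k.
  elim => [|n IH] hn.
    rewrite subn0 zext_big // big_pred0 // => k; by rewrite leqNgt ltn_ord.
  have h1 : ((d.+1 - n.+1).+1 = d.+1 - n)%N.
    by rewrite subnS prednK // subn_gt0.
  rewrite sum_ge_split; last by rewrite subSS leq_subr.
  by rewrite h1 -IH ?(ltnW hn) // /lam h1 subrK.
by rewrite -(subKn hj) key // leq_subr.
Qed.

Lemma sum_lam d (z : 'rV[R]_d) : \sum_(k < d.+1) lam z k = 1.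
Proof. by rewrite -(zext0 z) zext_lam. Qed.

Lemma lam_vz d (a : 'I_d.+1) m : lam (vz a) m = ((m == a))%:R.
Proof.
by rewrite /lam !zext_vz; case: (ltngtP m a) => h; rewrite ?subrr ?subr0.
Qed.

Lemma zext_comb d (t : R) (a b : 'rV[R]_d) m :
  zext (t *: a + (1 - t) *: b) m = t * zext a m + (1 - t) * zext b m.
Proof.
case: m => [|m]; first by rewrite !zext0; ring.
case: (ltnP m d) => hm; first by rewrite !(zextS_lt _ hm) !mxE.
by rewrite !zextS_ge // !mulr0 addr0.
Qed.

Lemma Pmap_perm d (rho : {perm 'I_d.+1}) (f : 'I_d.+1 -> R) k :
  Pmap rho f k = f (rho^-1 k)%g.
Proof.
rewrite /Pmap (bigD1 (rho^-1 k)%g) //= permKV eqxx mul1r big1 ?addr0 //.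
move=> i hi; case: eqP => [e|]; last by rewrite mul0r.
by move: hi; rewrite e permK eqxx.
Qed.

Lemma zext_Lmap d (rho : {perm 'I_d.+1}) (z : 'rV[R]_d) j :
  zext (Lmap rho z) j = \sum_(k < d.+1 | (j <= k)%N) lam z (rho^-1 k)%g.
Proof.
case: j => [|j].
  rewrite zext0 (eq_bigl xpredT) // -(sum_lam z).
  by rewrite [RHS](reindex_inj (@perm_inj _ rho)) /=; apply: eq_bigr => i _; rewrite permK.
case: (ltnP j d) => hj.
  rewrite (zextS_lt _ hj) /Lmap /Tinv mxE; apply: eq_bigr => k _.
  by rewrite Pmap_perm.
rewrite zextS_ge // big_pred0 // => k; apply/negbTE; rewrite -ltnNge ltnS.
by rewrite (leq_trans _ hj) // -ltnS.
Qed.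

Lemma lam_of_sum d (w : 'rV[R]_d) (F : nat -> R) :
  (forall j, zext w j = \sum_(k < d.+1 | (j <= k)%N) F k) ->
  forall j, (j <= d)%N -> lam w j = F j.
Proof.
by move=> h j hj; rewrite /lam !h sum_ge_split // addrK.
Qed.

Lemma lam_Lmap d (rho : {perm 'I_d.+1}) (z : 'rV[R]_d) (k : 'I_d.+1) :
  lam (Lmap rho z) k = lam z (rho^-1 k)%g.
Proof.
rewrite (@lam_of_sum _ _ (fun k => if (k < d.+1)%N then lam z (rho^-1 (inord k))%g else 0)).
- by rewrite ltn_ord inord_val.
- move=> j; rewrite zext_Lmap; apply: eq_bigr => i _; by rewrite ltn_ord inord_val.
- by rewrite -ltnS.
Qed.

Lemma sum_ind n (P : pred 'I_n) (x : 'I_n) :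
  \sum_(k < n | P k) ((k == x))%:R = (P x)%:R :> R.
Proof.
rewrite big_mkcond (bigD1 x) //= eqxx big1 ?addr0 //.
  by case: (P x).
by move=> i /negbTE ->; rewrite if_same.
Qed.

Lemma Lmap_vz d (rho : {perm 'I_d.+1}) (a : 'I_d.+1) :
  Lmap rho (vz a) = vz (rho a).
Proof.
apply: zext_inj => j; rewrite zext_Lmap zext_vz.
under eq_bigr => k _ do rewrite lam_vz val_eqE -(inj_eq (@perm_inj _ rho)) permKV.
by rewrite (@sum_ind _ (fun k : 'I_d.+1 => (j <= k)%N)).
Qed.
End A.
Arguments vz {R d} a.
Section B.
Variable R : realType.


Definition zp (Z1 Z2 : nat -> R) (pi : seq 'I_2) (t : nat) : R :=
  if nth 0 pi t.-1 == 0 then Z1 (jvec pi t).1 else Z2 (jvec pi t).2.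

Definition SS (ps : nat * nat -> R) (Z1 Z2 : nat -> R) (pi : seq 'I_2) : R :=
  ps (jvec pi 0) +
  \sum_(t < size pi) (ps (jvec pi t.+1) - ps (jvec pi t)) * zp Z1 Z2 pi t.+1.

Lemma stairE ps d1 d2 (z1 : 'rV[R]_d1) (z2 : 'rV[R]_d2) pi :
  stair_sum ps z1 z2 pi = SS ps (zext z1) (zext z2) pi.
Proof. by []. Qed.

Lemma I2_1 (x : 'I_2) : (x == 1) = ~~ (x == 0).
Proof. by case: x => [[|[|]]]. Qed.

Lemma count01 (s : seq 'I_2) :
  addn (count (pred1 0) s) (count (pred1 1) s) = size s.
Proof.
rewrite -(count_predC (pred1 0)); congr addn; apply: eq_count => x /=.
by rewrite I2_1.
Qed.

Lemma jvecS pi t : (t < size pi)%N ->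
  jvec pi t.+1 = (addn (jvec pi t).1 (nth 0 pi t == 0), addn (jvec pi t).2 (nth 0 pi t == 1)).
Proof. by move=> ht; rewrite /jvec (take_nth 0) // -cats1 !count_cat /= !addn0. Qed.

Lemma jvecS1 pi t : (t < size pi)%N ->
  (jvec pi t.+1).1 = if nth 0 pi t == 0 then (jvec pi t).1.+1 else (jvec pi t).1.
Proof.
move=> ht; rewrite /jvec (take_nth 0) // -cats1 !count_cat /=.
by case: ifP => h; rewrite /= ?addn0 ?addn1.
Qed.

Lemma jvecS2 pi t : (t < size pi)%N ->
  (jvec pi t.+1).2 = if nth 0 pi t == 0 then (jvec pi t).2 else (jvec pi t).2.+1.
Proof.
move=> ht; rewrite /jvec (take_nth 0) // -cats1 !count_cat /= I2_1.
by case: ifP => h; rewrite /= ?addn0 ?addn1.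
Qed.

Lemma jvec_le1 pi t : leq (jvec pi t).1 (count (pred1 0) pi).
Proof. by rewrite /jvec -[X in leq _ (count _ X)](cat_take_drop t pi) count_cat leq_addr. Qed.
Lemma jvec_le2 pi t : leq (jvec pi t).2 (count (pred1 1) pi).
Proof. by rewrite /jvec -[X in leq _ (count _ X)](cat_take_drop t pi) count_cat leq_addr. Qed.

Lemma jvec_size pi : jvec pi (size pi) = (count (pred1 0) pi, count (pred1 1) pi).
Proof. by rewrite /jvec take_size. Qed.

Lemma jvec0 pi : jvec pi 0 = (0%N, 0%N).
Proof. by rewrite /jvec take0. Qed.

Lemma jvec_rcons q i t : (t <= size q)%N -> jvec (rcons q i) t = jvec q t.
Proof. by move=> ht; rewrite /jvec -cats1 !takel_cat. Qed.

Lemma zp_rcons Z1 Z2 q i t : (0 < t <= size q)%N ->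
  zp Z1 Z2 (rcons q i) t = zp Z1 Z2 q t.
Proof.
case/andP=> h0 ht; rewrite /zp jvec_rcons // nth_rcons.
by rewrite (leq_trans _ ht) // prednK.
Qed.

Lemma zp_last Z1 Z2 q i :
  zp Z1 Z2 (rcons q i) (size q).+1 =
  if i == 0 then Z1 (count (pred1 0) q).+1 else Z2 (count (pred1 1) q).+1.
Proof.
rewrite /zp /= nth_rcons ltnn eqxx /jvec take_oversize ?size_rcons //.
rewrite -cats1 !count_cat /=; case: ifP => h; first by rewrite h addn0 addn1.
by rewrite I2_1 h addn0 addn1.
Qed.

Global Opaque jvec.

Lemma abel (a u : nat -> R) n :
  a 0%N * u 0%N + \sum_(t < n) (a t.+1 - a t) * u t.+1 =
  \sum_(t < n.+1) (u t - u t.+1) * a t + a n * u n.+1.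
Proof.
elim: n => [|n IH]; first by rewrite big_ord0 big_ord1; ring.
by rewrite big_ord_recr /= addrA IH [in RHS]big_ord_recr /=; ring.
Qed.

Lemma tele (a : nat -> R) n : \sum_(t < n) (a t.+1 - a t) = a n - a 0%N.
Proof.
elim: n => [|n IH]; first by rewrite big_ord0 subrr.
by rewrite big_ord_recr /= IH; ring.
Qed.

Definition uu Z1 Z2 pi t : R :=
  if t == 0%N then 1 else if (t <= size pi)%N then zp Z1 Z2 pi t else 0.

Lemma uu_last Z1 Z2 pi : uu Z1 Z2 pi (size pi).+1 = 0.
Proof. by rewrite /uu /= ltnn. Qed.

Lemma uu_S Z1 Z2 pi (t : 'I_(size pi)) : uu Z1 Z2 pi t.+1 = zp Z1 Z2 pi t.+1.
Proof. by rewrite /uu /= ltn_ord. Qed.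

Lemma SS_abel ps Z1 Z2 pi :
  SS ps Z1 Z2 pi =
  \sum_(t < (size pi).+1) (uu Z1 Z2 pi t - uu Z1 Z2 pi t.+1) * ps (jvec pi t).
Proof.
have := abel (fun t => ps (jvec pi t)) (uu Z1 Z2 pi) (size pi).
rewrite uu_last mulr0 addr0 => <-; rewrite /SS /uu eqxx mulr1; congr (_ + _).
by apply: eq_bigr => t _; rewrite /= ltn_ord.
Qed.

Lemma step1 Z1 Z2 pi m t : (t < size pi)%N ->
  (((m <= (jvec pi t.+1).1)%N)%:R - ((m <= (jvec pi t).1)%N)%:R) * zp Z1 Z2 pi t.+1
  = (((m <= (jvec pi t.+1).1)%N)%:R - ((m <= (jvec pi t).1)%N)%:R) * Z1 m.
Proof.
move=> ht; rewrite /zp (jvecS1 ht) -[t.+1.-1]/t.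
case: ifP => h; last by rewrite subrr !mul0r.
case: (ltngtP m (jvec pi t).1.+1) => hm.
- by rewrite -ltnS hm subrr !mul0r.
- by rewrite leqNgt (ltnW hm) subrr !mul0r.
- by rewrite hm.
Qed.

Lemma step2 Z1 Z2 pi m t : (t < size pi)%N ->
  (((m <= (jvec pi t.+1).2)%N)%:R - ((m <= (jvec pi t).2)%N)%:R) * zp Z1 Z2 pi t.+1
  = (((m <= (jvec pi t.+1).2)%N)%:R - ((m <= (jvec pi t).2)%N)%:R) * Z2 m.
Proof.
move=> ht; rewrite /zp (jvecS2 ht) -[t.+1.-1]/t.
case: ifP => h; first by rewrite subrr !mul0r.
case: (ltngtP m (jvec pi t).2.+1) => hm.
- by rewrite -ltnS hm subrr !mul0r.
- by rewrite leqNgt (ltnW hm) subrr !mul0r.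
- by rewrite hm.
Qed.

Lemma Z_decomp1 Z1 Z2 pi d1 d2 : staircase d1 d2 pi -> Z1 0%N = 1 ->
  (forall m, (d1 < m)%N -> Z1 m = 0) -> forall m,
  Z1 m = \sum_(t < (size pi).+1)
     (uu Z1 Z2 pi t - uu Z1 Z2 pi t.+1) * ((m <= (jvec pi t).1)%N)%:R.
Proof.
move=> [c1 c2] h0 hbig m.
have := abel (fun t => ((m <= (jvec pi t).1)%N)%:R) (uu Z1 Z2 pi) (size pi).
rewrite uu_last mulr0 addr0 => <-.
under eq_bigr => t _ do rewrite uu_S (step1 Z1 Z2 m (ltn_ord t)).
rewrite -big_distrl /= (tele (fun t => ((m <= (jvec pi t).1)%N)%:R)).
rewrite jvec0 jvec_size /= c1 /uu eqxx mulr1.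
case: m hbig => [|m] hbig; rewrite ?jvec0 /=; first by rewrite h0; ring.
case: (leqP m.+1 d1) => hm; first by rewrite add0r subr0 mul1r.
by rewrite hbig // mulr0 addr0.
Qed.

Lemma Z_decomp2 Z1 Z2 pi d1 d2 : staircase d1 d2 pi -> Z2 0%N = 1 ->
  (forall m, (d2 < m)%N -> Z2 m = 0) -> forall m,
  Z2 m = \sum_(t < (size pi).+1)
     (uu Z1 Z2 pi t - uu Z1 Z2 pi t.+1) * ((m <= (jvec pi t).2)%N)%:R.
Proof.
move=> [c1 c2] h0 hbig m.
have := abel (fun t => ((m <= (jvec pi t).2)%N)%:R) (uu Z1 Z2 pi) (size pi).
rewrite uu_last mulr0 addr0 => <-.
under eq_bigr => t _ do rewrite uu_S (step2 Z1 Z2 m (ltn_ord t)).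
rewrite -big_distrl /= (tele (fun t => ((m <= (jvec pi t).2)%N)%:R)).
rewrite jvec0 jvec_size /= c2 /uu eqxx mulr1.
case: m hbig => [|m] hbig; rewrite ?jvec0 /=; first by rewrite h0; ring.
case: (leqP m.+1 d2) => hm; first by rewrite add0r subr0 mul1r.
by rewrite hbig // mulr0 addr0.
Qed.

End B.
Section C.
Local Notation cnt0 q := (count (pred1 (0:'I_2)) q).
Local Notation cnt1 q := (count (pred1 (1:'I_2)) q).
Variable R : realType.

Lemma mono_le (Z : nat -> R) : (forall j, Z j.+1 <= Z j) ->
  forall i j, (i <= j)%N -> Z j <= Z i.
Proof.
move=> h i j /subnK <-; elim: (j - i)%N => [|k IH]; first by rewrite add0n.
by rewrite addSn (le_trans (h _)).
Qed.

Lemma Z_nonneg (Z : nat -> R) d : (forall j, Z j.+1 <= Z j) ->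
  (forall m, (d < m)%N -> Z m = 0) -> forall j, 0 <= Z j.
Proof.
move=> h hb j; rewrite -(hb (j + d).+1) ?ltnS ?leq_addl //.
by apply: mono_le => //; rewrite leqW // leq_addr.
Qed.

Lemma Z_le1 (Z : nat -> R) : (forall j, Z j.+1 <= Z j) -> Z 0%N = 1 ->
  forall j, Z j <= 1.
Proof. by move=> h h0 j; rewrite -h0; apply: mono_le. Qed.

Section Build.
Variables (Z1 Z2 : nat -> R) (d1 d2 : nat).
Hypotheses (m1 : forall j, Z1 j.+1 <= Z1 j) (m2 : forall j, Z2 j.+1 <= Z2 j).
Hypotheses (b1 : forall m, (d1 < m)%N -> Z1 m = 0) (b2 : forall m, (d2 < m)%N -> Z2 m = 0).

Lemma sorted_build k : (k <= d1 + d2)%N -> exists q : seq 'I_2,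
  [/\ size q = k, leq (count (pred1 0) q) d1, leq (count (pred1 1) q) d2,
   (forall t, (0 < t)%N -> (t < size q)%N -> zp Z1 Z2 q t.+1 <= zp Z1 Z2 q t) &
   ((0 < size q)%N -> Z1 (count (pred1 0) q).+1 <= zp Z1 Z2 q (size q) /\
                      Z2 (count (pred1 1) q).+1 <= zp Z1 Z2 q (size q))].
Proof.
have n1 := Z_nonneg m1 b1; have n2 := Z_nonneg m2 b2.
elim: k => [|k IH] hk; first by exists [::]; split.
have [q [sq c1 c2 hs hl]] := IH (ltnW hk).
have hsum := count01 q.
set b := ((cnt0 q < d1)%N &&
          (Z2 (count (pred1 1) q).+1 <= Z1 (count (pred1 0) q).+1)).
pose i : 'I_2 := if b then 0 else 1.
have sortP : (0 < size q)%N -> zp Z1 Z2 (rcons q i) (size q).+1 <= zp Z1 Z2 q (size q).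
  by move=> hq; rewrite zp_last; case: (hl hq) => h1 h2; case: ifP.
have k0 : count (pred1 0) (rcons q i) = addn (count (pred1 0) q) (i == 0).
  by rewrite -cats1 count_cat /= addn0.
have k1 : count (pred1 1) (rcons q i) = addn (count (pred1 1) q) (i == 1).
  by rewrite -cats1 count_cat /= addn0.
exists (rcons q i); split.
- by rewrite size_rcons sq.
- rewrite k0 /i; case hb: b; last by rewrite addn0.
  by move: hb; rewrite /b => /andP[h _]; rewrite addn1.
- rewrite k1 /i; case hb: b; first by rewrite addn0.
  rewrite addn1; case: (ltnP (cnt1 q) d2) => // hc.
  have e2 : cnt1 q = d2 by apply/eqP; rewrite eqn_leq c2 hc.
  have h1 : (cnt0 q < d1)%N.
    by move: hk; rewrite -sq -hsum e2 ltn_add2r.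
  move: hb; rewrite /b h1 /= e2 b2 // => /negbT; rewrite -ltNge => hlt.
  by move: (n1 (count (pred1 0) q).+1); rewrite leNgt hlt.
- move=> t t0; rewrite size_rcons ltnS leq_eqVlt => /orP[/eqP e | ht].
    have hq : (0 < size q)%N by rewrite -e.
    by rewrite e [zp _ _ _ (size q)]zp_rcons ?hq ?leqnn // sortP.
  by rewrite !zp_rcons ?hs // t0 ltnW.
- move=> _; rewrite size_rcons zp_last k0 k1 /i.
  case hb: b; move: hb; rewrite /b.
    by case/andP => _ h; rewrite eqxx /= addn0 addn1; split.
  have ne : ((1 : 'I_2) == 0) = false by [].
  rewrite ne eqxx addn0 addn1 => /negbT; rewrite negb_and -ltNge => hor; split => //.
  case/orP: hor => [|/ltW //]; rewrite -leqNgt => hd.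
  by rewrite b1 // n2.
Qed.

Lemma sorted_stair : exists pi, staircase d1 d2 pi /\
  forall t, (0 < t)%N -> (t < size pi)%N -> zp Z1 Z2 pi t.+1 <= zp Z1 Z2 pi t.
Proof.
have [q [sq c1 c2 hs _]] := sorted_build (leqnn (d1 + d2)).
exists q; split => //; have := count01 q; rewrite sq => hsum.
split; apply/eqP; rewrite eqn_leq ?c1 ?c2 /=.
  by rewrite -(leq_add2r (count (pred1 1) q)) hsum leq_add2l.
by rewrite -(leq_add2l (count (pred1 0) q)) hsum leq_add2r.
Qed.

Lemma uu_nonneg pi : Z1 0%N = 1 -> Z2 0%N = 1 ->
  (forall t, (0 < t)%N -> (t < size pi)%N -> zp Z1 Z2 pi t.+1 <= zp Z1 Z2 pi t) ->
  forall t, 0 <= uu Z1 Z2 pi t - uu Z1 Z2 pi t.+1.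
Proof.
move=> h01 h02 hs t; rewrite subr_ge0.
have n1 := Z_nonneg m1 b1; have n2 := Z_nonneg m2 b2.
have l1 := Z_le1 m1 h01; have l2 := Z_le1 m2 h02.
have zb : forall s, 0 <= zp Z1 Z2 pi s <= 1.
  by move=> s; rewrite /zp; case: ifP => _; rewrite ?n1 ?l1 ?n2 ?l2.
rewrite /uu /=; case: t => [|t] /=.
  by case: ifP => _; [case/andP: (zb 1%N) | ].
case: (ltngtP t.+1 (size pi)) => h.
- by apply: hs.
- by [].
- by case/andP: (zb t.+1).
Qed.

End Build.

Lemma stair_super d1 d2 pi (g h : nat -> R) a1 a2 : staircase d1 d2 pi ->
  (forall j k, (j <= k)%N -> (k <= d1)%N -> g j <= g k) ->
  (forall j k, (j <= k)%N -> (k <= d2)%N -> h j <= h k) ->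
  (a1 <= d1)%N -> (a2 <= d2)%N ->
  g a1 * h a2 <= SS (fun j => g j.1 * h j.2)
     (fun m => ((m <= a1)%N)%:R) (fun m => ((m <= a2)%N)%:R) pi.
Proof.
move=> [s1 s2] hg hh ha1 ha2.
set ps := (fun j : nat * nat => g j.1 * h j.2).
set Z1 := (fun m => ((m <= a1)%N)%:R : R).
set Z2 := (fun m => ((m <= a2)%N)%:R : R).
have key : forall t, (t <= size pi)%N ->
  g (minn (jvec pi t).1 a1) * h (minn (jvec pi t).2 a2) <=
  ps (jvec pi 0) + \sum_(s < t) (ps (jvec pi s.+1) - ps (jvec pi s)) * zp Z1 Z2 pi s.+1.
  elim => [|t IH] ht.
    by rewrite big_ord0 addr0 jvec0 /ps /= !min0n.
  have hc1 : ((jvec pi t).1 <= d1)%N by rewrite -s1 jvec_le1.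
  have hc2 : ((jvec pi t).2 <= d2)%N by rewrite -s2 jvec_le2.
  have e1 := jvecS1 ht; have e2 := jvecS2 ht.
  have IH' := IH (ltnW ht).
  rewrite big_ord_recr /= addrA.
  rewrite /zp -[t.+1.-1]/t /ps e1 e2.
  move: IH'; rewrite -/ps.
  set c1 := (jvec pi t).1; set c2 := (jvec pi t).2.
  case: ifP => hn /=; rewrite /Z1 /Z2.
  - case: (leqP c1.+1 a1) => hca.
    + rewrite (minn_idPl (ltnW hca)) (_ : (nat_of_bool true)%:R = 1 :> R) ?mulr1 // => hS.
      have f1 : g c1 <= g c1.+1 by apply: hg => //; apply: leq_trans hca ha1.
      have f2 : h (minn c2 a2) <= h c2 by apply: hh => //; apply: geq_minl.
      move: hS; set S := (X in _ <= X) => hS.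
      have : g c1.+1 * h (minn c2 a2) <= S + (g c1.+1 * h c2 - g c1 * h c2) by nra.
      exact.
    + rewrite (minn_idPr (hca : (a1 <= c1)%N)) (_ : (nat_of_bool false)%:R = 0 :> R) // mulr0 addr0 => h1; exact: h1.
  - case: (leqP c2.+1 a2) => hca.
    + rewrite (minn_idPl (ltnW hca)) (_ : (nat_of_bool true)%:R = 1 :> R) ?mulr1 // => hS.
      have f1 : h c2 <= h c2.+1 by apply: hh => //; apply: leq_trans hca ha2.
      have f2 : g (minn c1 a1) <= g c1 by apply: hg => //; apply: geq_minl.
      move: hS; set S := (X in _ <= X) => hS.
      have : g (minn c1 a1) * h c2.+1 <= S + (g c1 * h c2.+1 - g c1 * h c2) by nra.
      exact.
    + rewrite (minn_idPr (hca : (a2 <= c2)%N)) (_ : (nat_of_bool false)%:R = 0 :> R) // mulr0 addr0 => h1; exact: h1.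
have := key _ (leqnn (size pi)).
by rewrite jvec_size /= s1 s2 (minn_idPr ha1) (minn_idPr ha2).
Qed.

End C.
Section D1.
Variable R : realType.

Lemma tel_p d (p : 'I_d.+1 -> R) (a : 'I_d.+1) :
  \sum_(j < d) (p (inord j.+1) - p (inord j)) * ((j < a)%N)%:R = p a - p ord0.
Proof.
have ha : (a <= d)%N by rewrite -ltnS.
have e : forall j : 'I_d, (p (inord j.+1) - p (inord j)) * ((j < a)%N)%:R =
    if (j < a)%N then p (inord j.+1) - p (inord j) else 0.
  by move=> j; case: (j < a)%N; rewrite ?mulr1 ?mulr0.
rewrite (eq_bigr _ (fun j _ => e j)).
rewrite -big_mkcond /= -(big_ord_widen d (fun j => p (inord j.+1) - p (inord j)) ha).
rewrite (tele (fun j => p (inord j))) inord_val; congr (_ - _); congr p.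
by apply/val_inj; rewrite /= inordK.
Qed.

Lemma inDelta_vz d (a : 'I_d.+1) : inDelta (vz a : 'rV[R]_d).
Proof.
move=> j _; rewrite !zext_vz ler_nat.
by case: (leqP j.+1 a) => h //; rewrite (ltnW h).
Qed.

Lemma inB_vz d (p : 'I_d.+1 -> R) (a : 'I_d.+1) : inB p (p a) (vz a).
Proof.
split; last exact: inDelta_vz.
under eq_bigr => j _ do rewrite mxE.
by rewrite tel_p addrC subrK.
Qed.

Lemma lamE d (z : 'rV[R]_d) (j : nat) : zext z j - zext z j.+1 = lam z j.
Proof. by []. Qed.

Lemma enc_vz d K (eta : 'I_d.+1 -> 'I_K -> bool) (a : 'I_d.+1) :
  enc_ok eta (vz a : 'rV[R]_d) (\row_k ((eta a k)%:R)).
Proof.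
move=> k; rewrite mxE.
under eq_bigr => j _ do rewrite lamE lam_vz val_eqE.
under [X in _ /\ X <= _]eq_bigr => j _ do rewrite lamE lam_vz val_eqE.
rewrite (@sum_ind _ _ (fun j => eta j k)) (@sum_ind _ _ (fun j => ~~ eta j k)).
by case: (eta a k); rewrite /= ?subrr ?subr0.
Qed.

Lemma lam_ge0 d (z : 'rV[R]_d) j : inDelta z -> (j <= d)%N -> 0 <= lam z j.
Proof. by move=> h hj; rewrite /lam subr_ge0 h. Qed.

Lemma del_eq d K (eta : 'I_d.+1 -> 'I_K -> bool) (z : 'rV[R]_d) (del : 'rV[R]_K) : enc_ok eta z del ->
  forall k, del ord0 k = \sum_(j < d.+1 | eta j k) lam z j.
Proof.
move=> h k; case: (h k) => h1 h2.
have hs := sum_lam z; rewrite (bigID (fun j => eta j k)) /= in hs.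
apply/le_anti; rewrite h1 andbT.
by move: h2; rewrite -hs; lra.
Qed.

Lemma lam_decomp d (I : finType) (y : 'rV[R]_d) (c : I -> R) (Y : I -> 'rV[R]_d) :
  (forall m, zext y m = \sum_i c i * zext (Y i) m) ->
  forall j, lam y j = \sum_i c i * lam (Y i) j.
Proof.
move=> h j; rewrite /lam !h -sumrB; apply: eq_bigr => i _; ring.
Qed.

Lemma Lmap_decomp d (I : finType) (rho : {perm 'I_d.+1}) (y : 'rV[R]_d)
   (c : I -> R) (b : I -> 'I_d.+1) :
  (forall m, zext y m = \sum_i c i * zext (vz (b i)) m) ->
  forall m, zext (Lmap rho y) m = \sum_i c i * zext (vz (rho (b i))) m.
Proof.
move=> h m; rewrite zext_Lmap.
under eq_bigr => k _ do rewrite (lam_decomp h).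
rewrite exchange_big /=; apply: eq_bigr => i _.
by rewrite -big_distrr /= -Lmap_vz zext_Lmap.
Qed.

Lemma Lmap_comb d (rho : {perm 'I_d.+1}) (t : R) (a b : 'rV[R]_d) :
  Lmap rho (t *: a + (1 - t) *: b) = t *: Lmap rho a + (1 - t) *: Lmap rho b.
Proof.
apply: zext_inj => m; rewrite zext_comb !zext_Lmap !big_distrr -big_split /=.
by apply: eq_bigr => k _; rewrite /lam !zext_comb; ring.
Qed.

Lemma SS_ext ps Z1 Z2 Z1' Z2' pi : (forall m, Z1 m = Z1' m) -> (forall m, Z2 m = Z2' m) ->
  SS ps Z1 Z2 pi = SS ps Z1' Z2' pi :> R.
Proof.
move=> h1 h2; rewrite /SS; congr (_ + _); apply: eq_bigr => t _.
by rewrite /zp h1 h2.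
Qed.

Lemma SS_ext_ps ps ps' Z1 Z2 pi : (forall j, ps j = ps' j) ->
  SS ps Z1 Z2 pi = SS ps' Z1 Z2 pi :> R.
Proof.
move=> h; rewrite /SS h; congr (_ + _); apply: eq_bigr => t _; by rewrite !h.
Qed.

Lemma SS_opp ps Z1 Z2 pi : SS (fun j => - ps j) Z1 Z2 pi = - SS ps Z1 Z2 pi :> R.
Proof.
rewrite /SS opprD -sumrN; congr (_ + _); apply: eq_bigr => t _; ring.
Qed.

Lemma SS_comb ps (t : R) Z1 Z2 Z1' Z2' pi :
  SS ps (fun m => t * Z1 m + (1 - t) * Z1' m) (fun m => t * Z2 m + (1 - t) * Z2' m) pi
  = t * SS ps Z1 Z2 pi + (1 - t) * SS ps Z1' Z2' pi.
Proof.
rewrite /SS !mulrDr !big_distrr addrACA -big_split /=; congr (_ + _).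
  ring.
by apply: eq_bigr => s _; rewrite /zp; case: ifP => _; ring.
Qed.

Lemma natb (b : bool) : (b%:R : R) = if b then 1 else 0.
Proof. by case: b. Qed.

Lemma concentrate (I : finType) (w : I -> R) (x y : I -> nat) (a1 a2 : nat) :
  (forall i, 0 <= w i) ->
  (forall m, ((m <= a1)%N)%:R = \sum_i w i * ((m <= x i)%N)%:R) ->
  (forall m, ((m <= a2)%N)%:R = \sum_i w i * ((m <= y i)%N)%:R) ->
  forall F : nat * nat -> R, \sum_i w i * F (x i, y i) = F (a1, a2).
Proof.
move=> w0 hx hy F.
have hs : \sum_i w i = 1.
  have := hx 0%N; rewrite !natb leq0n => ->.
  by apply: eq_bigr => i _; rewrite mulr1.
have key : forall (a : nat) (x : I -> nat),
    (forall m, ((m <= a)%N)%:R = \sum_i w i * ((m <= x i)%N)%:R) ->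
    forall i, w i != 0 -> x i = a.
  move=> a z hz i wi.
  have e1 : \sum_i w i * ((a < z i)%N)%:R = 0.
    by rewrite -hz ltnn.
  have e2 : \sum_i w i * ((z i < a)%N)%:R = 0.
    have e' : \sum_i w i * ((a <= z i)%N)%:R = 1 by rewrite -(hz a) leqnn.
    have h0 : \sum_i w i - \sum_i w i * ((a <= z i)%N)%:R = 0 by rewrite hs e' subrr.
    apply: (etrans _ h0); rewrite -sumrB; apply: eq_bigr => j _.
    by rewrite !natb ltnNge; case: (a <= z j)%N => /=; ring.
  have p1 := psumr_eq0P (fun j _ => mulr_ge0 (w0 j) (ler0n _ _)) e1 (i := i) isT.
  have p2 := psumr_eq0P (fun j _ => mulr_ge0 (w0 j) (ler0n _ _)) e2 (i := i) isT.
  move: p1 p2; case: (ltngtP a (z i)) => //= _ e1' e2';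
  by move: wi; rewrite -[w i]mulr1 ?e1' ?e2' eqxx.
rewrite -[RHS]mul1r -hs big_distrl; apply: eq_bigr => i _ /=.
case: (eqVneq (w i) 0) => [-> | wi]; first by rewrite !mul0r.
by rewrite (key _ _ hx i wi) (key _ _ hy i wi) mulrC.
Qed.

Lemma vertex_exact d1 d2 (ps : nat * nat -> R) a1 a2 :
  (a1 <= d1)%N -> (a2 <= d2)%N -> exists pi, staircase d1 d2 pi /\
  SS ps (fun m => ((m <= a1)%N)%:R) (fun m => ((m <= a2)%N)%:R) pi = ps (a1, a2).
Proof.
move=> ha1 ha2.
set Z1 := fun m => ((m <= a1)%N)%:R : R; set Z2 := fun m => ((m <= a2)%N)%:R : R.
have m1 : forall j, Z1 j.+1 <= Z1 j.
  by move=> j; rewrite /Z1 ler_nat; case: (leqP j.+1 a1) => h //; rewrite (ltnW h).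
have m2 : forall j, Z2 j.+1 <= Z2 j.
  by move=> j; rewrite /Z2 ler_nat; case: (leqP j.+1 a2) => h //; rewrite (ltnW h).
have b1 : forall m, (d1 < m)%N -> Z1 m = 0.
  by move=> m hm; rewrite /Z1 leqNgt (leq_ltn_trans ha1 hm).
have b2 : forall m, (d2 < m)%N -> Z2 m = 0.
  by move=> m hm; rewrite /Z2 leqNgt (leq_ltn_trans ha2 hm).
have [pi [st hs]] := sorted_stair m1 m2 b1 b2.
exists pi; split => //; rewrite SS_abel.
apply: (concentrate (x := fun t : 'I_(size pi).+1 => (jvec pi t).1)
                    (y := fun t : 'I_(size pi).+1 => (jvec pi t).2)).
- by move=> i; apply: (uu_nonneg m1 m2 b1 b2).
- move=> m; exact: (@Z_decomp1 _ Z1 Z2 pi d1 d2 st (erefl _) b1 m).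

- move=> m; exact: (@Z_decomp2 _ Z1 Z2 pi d1 d2 st (erefl _) b2 m).
Qed.

End D1.
Section D2.
Variable R : realType.

Lemma mono_inord d (p : 'I_d.+1 -> R) (f : R -> R) (s : {perm 'I_d.+1}) :
  (forall j k : 'I_d.+1, (j <= k)%N -> f (p (s j)) <= f (p (s k))) ->
  forall j k, (j <= k)%N -> (k <= d)%N ->
    f (p (s (inord j))) <= f (p (s (inord k))).
Proof.
move=> h j k hjk hk; apply: h.
have hk' : (k < d.+1)%N by rewrite ltnS.
have hj' : (j < d.+1)%N by rewrite ltnS (leq_trans hjk).
by rewrite !inordK.
Qed.

Lemma inB_comb d (p : 'I_d.+1 -> R) xa xb (za zb : 'rV[R]_d) (t : R) :
  0 <= t <= 1 -> inB p xa za -> inB p xb zb ->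
  inB p (t * xa + (1 - t) * xb) (t *: za + (1 - t) *: zb).
Proof.
move=> /andP[t0 t1] [-> da] [-> db]; split.
  have -> : \sum_(j < d) (p (inord j.+1) - p (inord j)) * (t *: za + (1 - t) *: zb) ord0 j
     = t * \sum_(j < d) (p (inord j.+1) - p (inord j)) * za ord0 j
       + (1 - t) * \sum_(j < d) (p (inord j.+1) - p (inord j)) * zb ord0 j.
    rewrite !big_distrr -big_split /=; apply: eq_bigr => j _; rewrite !mxE; ring.
  ring.
move=> j hj; rewrite !zext_comb; have := da j hj; have := db j hj; nra.
Qed.

Lemma enc_comb d K (eta : 'I_d.+1 -> 'I_K -> bool) (za zb : 'rV[R]_d)
   (da db : 'rV[R]_K) (t : R) :
  0 <= t <= 1 -> enc_ok eta za da -> enc_ok eta zb db ->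
  enc_ok eta (t *: za + (1 - t) *: zb) (t *: da + (1 - t) *: db).
Proof.
move=> /andP[t0 t1] ha hb k; rewrite !mxE.
have e : forall (P : pred 'I_d.+1),
    \sum_(j < d.+1 | P j) (zext (t *: za + (1 - t) *: zb) j - zext (t *: za + (1 - t) *: zb) j.+1)
    = t * \sum_(j < d.+1 | P j) (zext za j - zext za j.+1)
      + (1 - t) * \sum_(j < d.+1 | P j) (zext zb j - zext zb j.+1).
  move=> P; rewrite !big_distrr -big_split /=; apply: eq_bigr => j _.
  rewrite !zext_comb; ring.
rewrite !e; case: (ha k) => a1 a2; case: (hb k) => b1 b2; split; nra.
Qed.

Lemma unit_comb K (da db : 'rV[R]_K) (t : R) : 0 <= t <= 1 ->
  unit_row da -> unit_row db -> unit_row (t *: da + (1 - t) *: db).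
Proof.
move=> /andP[t0 t1] ha hb k; rewrite !mxE.
case/andP: (ha k) => ? ?; case/andP: (hb k) => ? ?; apply/andP; split; nra.
Qed.

Lemma row_decomp d (I : finType) (z : 'rV[R]_d) (c : I -> R) (a : I -> 'I_d.+1) :
  (forall m, zext z m = \sum_i c i * zext (vz (a i)) m) ->
  \sum_i c i *: vz (a i) = z.
Proof.
move=> h; apply/rowP => j; rewrite summxE -zext_ord h.
by apply: eq_bigr => i _; rewrite mxE zext_ord.
Qed.

Lemma csum1 d (I : finType) (z : 'rV[R]_d) (c : I -> R) (a : I -> 'I_d.+1) :
  (forall m, zext z m = \sum_i c i * zext (vz (a i)) m) -> \sum_i c i = 1.
Proof.
move=> h; have := h 0%N; rewrite zext0 => ->.
by apply: eq_bigr => i _; rewrite zext0 mulr1.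
Qed.

Lemma x_decomp d (I : finType) (p : 'I_d.+1 -> R) x (z : 'rV[R]_d) (c : I -> R)
   (a : I -> 'I_d.+1) :
  inB p x z -> (forall m, zext z m = \sum_i c i * zext (vz (a i)) m) ->
  \sum_i c i * p (a i) = x.
Proof.
move=> [-> _] h; have hs := csum1 h.
have e : forall i, p (a i) = p ord0 + \sum_(j < d) (p (inord j.+1) - p (inord j)) * ((j < a i)%N)%:R.
  by move=> i; rewrite tel_p addrC subrK.
under eq_bigr => i _ do rewrite e mulrDr.
rewrite big_split /= -big_distrl hs; congr (_ + _); first exact: mul1r.
under eq_bigr => i _ do rewrite big_distrr.
rewrite exchange_big /=; apply: eq_bigr => j _.
rewrite -zext_ord h big_distrr; apply: eq_bigr => i _; rewrite zext_vz /=; ring.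
Qed.

Lemma del_decomp d K (eta : 'I_d.+1 -> 'I_K -> bool) (I : finType) (z : 'rV[R]_d)
   (del : 'rV[R]_K) (c : I -> R) (a : I -> 'I_d.+1) :
  enc_ok eta z del -> (forall m, zext z m = \sum_i c i * zext (vz (a i)) m) ->
  \sum_i c i *: (\row_k ((eta (a i) k)%:R) : 'rV[R]_K) = del.
Proof.
move=> he h; apply/rowP => k; rewrite summxE (del_eq he).
under eq_bigr => i _ do rewrite !mxE.
under [RHS]eq_bigr => j _ do rewrite (lam_decomp h).
rewrite exchange_big /=; apply: eq_bigr => i _; rewrite -big_distrr /=; congr (_ * _).
under eq_bigr => j _ do rewrite lam_vz val_eqE.
by rewrite (@sum_ind _ _ (fun j => eta j k)).
Qed.

Lemma enc_bin d K (eta : 'I_d.+1 -> 'I_K -> bool)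
  (heta : forall t t' : 'I_d.+1, (forall k, eta t k = eta t' k) -> t = t')
  (z : 'rV[R]_d) (del : 'rV[R]_K) :
  inDelta z -> enc_ok eta z del -> binary_row del ->
  exists a : 'I_d.+1, z = vz a /\ del = \row_k ((eta a k)%:R).
Proof.
move=> hz he hb.
have l0 : forall j : 'I_d.+1, 0 <= lam z j by move=> j; apply: lam_ge0; rewrite // -ltnS.
have hs := sum_lam z.
have [j0 hj0] : exists j0 : 'I_d.+1, 0 < lam z j0.
  case: (pickP (fun j : 'I_d.+1 => 0 < lam z j)) => [j h|h]; first by exists j.
  have : \sum_(k < d.+1) lam z k <= 0.
    by apply: sumr_le0 => k _; move: (h k) => /negbT; rewrite -leNgt.
  by rewrite hs ler10.
have zero_of : forall (Q : pred 'I_d.+1), \sum_(j < d.+1 | Q j) lam z j <= 0 ->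
    forall j, Q j -> lam z j = 0.
  move=> Q hQ j qj; have e : \sum_(j < d.+1 | Q j) lam z j = 0.
    by apply/le_anti; rewrite hQ sumr_ge0.
  exact: (psumr_eq0P (fun j _ => l0 j) e).
have key : forall j : 'I_d.+1, 0 < lam z j -> forall k, eta j k = (del ord0 k == 1).
  move=> j hj k; case: (he k) => h1 h2; case: (hb k) => e; rewrite e.
  - rewrite eq_sym oner_eq0; apply/negbTE/negP => ej.
    rewrite e in h1; have ez := zero_of (fun j => eta j k) h1 j ej.
    by move: hj; rewrite ez ltxx.
  - rewrite eqxx; apply/negbNE/negP => ej.
    rewrite e subrr in h2; have ez := zero_of (fun j => ~~ eta j k) h2 j ej.
    by move: hj; rewrite ez ltxx.
have uniq : forall j : 'I_d.+1, 0 < lam z j -> j = j0.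
  by move=> j hj; apply: heta => k; rewrite (key _ hj) (key _ hj0).
have lz : forall j : 'I_d.+1, lam z j = ((j == j0))%:R.
  have others : forall j : 'I_d.+1, j != j0 -> lam z j = 0.
    move=> j nj; apply/le_anti; rewrite l0 andbT leNgt; apply/negP => hj.
    by move: nj; rewrite (uniq _ hj) eqxx.
  have e0 : lam z j0 = 1.
    by rewrite -hs (bigD1 j0) //= big1 ?addr0 // => j; apply: others.
  by move=> j; case: eqP => [->|/eqP nj]; [rewrite e0 | rewrite others].
exists j0; split.
  apply: zext_inj => m; rewrite zext_lam zext_vz.
  under eq_bigr => k _ do rewrite (lz k).
  by rewrite (@sum_ind _ _ (fun k : 'I_d.+1 => (m <= k)%N)).
apply/rowP => k; rewrite mxE (key _ hj0).
by case: (hb k) => ->; rewrite ?eqxx // eq_sym oner_eq0.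
Qed.

End D2.
Section E.
Variables (R : realType) (d1 d2 K1 K2 : nat).
Variables (p1 : 'I_d1.+1 -> R) (p2 : 'I_d2.+1 -> R) (f1 f2 : R -> R).
Variables (s1 t1 : {perm 'I_d1.+1}) (s2 t2 : {perm 'I_d2.+1}).
Variables (eta1 : 'I_d1.+1 -> 'I_K1 -> bool) (eta2 : 'I_d2.+1 -> 'I_K2 -> bool).
Hypothesis hs1 : forall j k : 'I_d1.+1, (j <= k)%N -> f1 (p1 (s1 j)) <= f1 (p1 (s1 k)).
Hypothesis hs2 : forall j k : 'I_d2.+1, (j <= k)%N -> f2 (p2 (s2 j)) <= f2 (p2 (s2 k)).
Hypothesis ht1 : forall j k : 'I_d1.+1, (j <= k)%N -> f1 (p1 (t1 j)) <= f1 (p1 (t1 k)).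
Hypothesis ht2 : forall j k : 'I_d2.+1, (j <= k)%N -> f2 (p2 (t2 j)) >= f2 (p2 (t2 k)).

Hypothesis heta1 : forall t t' : 'I_d1.+1, (forall k, eta1 t k = eta1 t' k) -> t = t'.
Hypothesis heta2 : forall t t' : 'I_d2.+1, (forall k, eta2 t k = eta2 t' k) -> t = t'.

Local Notation pt := (point R d1 d2 K1 K2).
Local Notation P := (relaxation p1 p2 f1 f2 s1 s2 t1 t2 eta1 eta2).

Definition Wpt (a1 : 'I_d1.+1) (a2 : 'I_d2.+1) : pt :=
  Point (p1 a1) (p2 a2) (vz a1) (vz a2) (f1 (p1 a1) * f2 (p2 a2))
        (\row_k ((eta1 a1 k)%:R)) (\row_k ((eta2 a2 k)%:R)).

Lemma stair_lo pi (a1 : 'I_d1.+1) (a2 : 'I_d2.+1) : staircase d1 d2 pi ->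
  f1 (p1 a1) * f2 (p2 a2) <=
  stair_sum (psi f1 f2 p1 p2 s1 s2) (vz (s1^-1 a1)%g) (vz (s2^-1 a2)%g) pi.
Proof.
move=> st.
have := @stair_super R d1 d2 pi (fun j => f1 (p1 (s1 (inord j))))
   (fun j => f2 (p2 (s2 (inord j)))) (s1^-1 a1)%g (s2^-1 a2)%g st
   (@mono_inord R d1 p1 f1 s1 hs1) (@mono_inord R d2 p2 f2 s2 hs2).
move=> /(_ (leq_ord _) (leq_ord _)); rewrite !inord_val !permKV => h.
by rewrite stairE (SS_ext _ _ (zext_vz R _) (zext_vz R _)).
Qed.

Lemma stair_hi pi (a1 : 'I_d1.+1) (a2 : 'I_d2.+1) : staircase d1 d2 pi ->
  stair_sum (psi f1 f2 p1 p2 t1 t2) (vz (t1^-1 a1)%g) (vz (t2^-1 a2)%g) pi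
  <= f1 (p1 a1) * f2 (p2 a2).
Proof.
move=> st.
have ht2' : forall j k : 'I_d2.+1, (j <= k)%N -> - f2 (p2 (t2 j)) <= - f2 (p2 (t2 k)).
  by move=> j k h; rewrite lerN2 ht2.
have := @stair_super R d1 d2 pi (fun j => f1 (p1 (t1 (inord j))))
   (fun j => - f2 (p2 (t2 (inord j)))) (t1^-1 a1)%g (t2^-1 a2)%g st
   (@mono_inord R d1 p1 f1 t1 ht1) (@mono_inord R d2 p2 (fun x => - f2 x) t2 ht2').
move=> /(_ (leq_ord _) (leq_ord _)); rewrite !inord_val !permKV => h.
rewrite stairE (SS_ext _ _ (zext_vz R _) (zext_vz R _)).
move: h; rewrite (@SS_ext_ps R _ (fun j => - psi f1 f2 p1 p2 t1 t2 j)); last first.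
  by move=> j; rewrite /psi mulrN.
by rewrite SS_opp mulrN lerN2.
Qed.

Lemma unit_eta d K (eta : 'I_d.+1 -> 'I_K -> bool) a :
  unit_row (\row_k ((eta a k)%:R) : 'rV[R]_K).
Proof. by move=> k; rewrite mxE; case: (eta a k); rewrite ?ler01 ?lexx. Qed.

Lemma bin_eta d K (eta : 'I_d.+1 -> 'I_K -> bool) a :
  binary_row (\row_k ((eta a k)%:R) : 'rV[R]_K).
Proof. by move=> k; rewrite mxE; case: (eta a k); auto. Qed.

Lemma P_W a1 a2 : P (Wpt a1 a2).
Proof.
split.
- by split; apply: inB_vz.
- by split; apply: unit_eta.
- by split; apply: enc_vz.
- exists (vz (s1^-1 a1)%g), (vz (s2^-1 a2)%g); rewrite !Lmap_vz !permKV; split => //.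
  split => // pi st; exact: stair_lo.
- exists (vz (t1^-1 a1)%g), (vz (t2^-1 a2)%g); rewrite !Lmap_vz !permKV; split => //.
  split => // pi st; exact: stair_hi.
Qed.

Lemma bin_W a1 a2 : binary_row (pdel1 (Wpt a1 a2)) /\ binary_row (pdel2 (Wpt a1 a2)).
Proof. by split; apply: bin_eta. Qed.

Lemma P_conv (a b : pt) (t : R) : P a -> P b -> 0 <= t <= 1 -> P (pcomb t a b).
Proof.
case: a => xa1 xa2 za1 za2 ma da1 da2; case: b => xb1 xb2 zb1 zb2 mb db1 db2.
move=> [/= [Ba1 Ba2] [Ua1 Ua2] [Ea1 Ea2] [ya1 [ya2 [La1 [La2 Sa]]]] [wa1 [wa2 [Ma1 [Ma2 Ta]]]]].
move=> [/= [Bb1 Bb2] [Ub1 Ub2] [Eb1 Eb2] [yb1 [yb2 [Lb1 [Lb2 Sb]]]] [wb1 [wb2 [Mb1 [Mb2 Tb]]]]].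
move=> ht; have /andP[tt0 tt1] := ht; split => /=.
- by split; apply: inB_comb.
- by split; apply: unit_comb.
- by split; apply: enc_comb.
- exists (t *: ya1 + (1 - t) *: yb1), (t *: ya2 + (1 - t) *: yb2).
  rewrite !Lmap_comb La1 La2 Lb1 Lb2; split => //; split => // pi st.
  rewrite stairE (SS_ext _ _ (zext_comb t _ _) (zext_comb t _ _)) SS_comb -!stairE.
  have := Sa pi st; have := Sb pi st; nra.
- exists (t *: wa1 + (1 - t) *: wb1), (t *: wa2 + (1 - t) *: wb2).
  rewrite !Lmap_comb Ma1 Ma2 Mb1 Mb2; split => //; split => // pi st.
  rewrite stairE (SS_ext _ _ (zext_comb t _ _) (zext_comb t _ _)) SS_comb -!stairE.
  have := Ta pi st; have := Tb pi st; nra.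
Qed.

Definition pcombo n (c : 'I_n -> R) (w : 'I_n -> pt) : pt :=
  Point (\sum_i c i * px1 (w i)) (\sum_i c i * px2 (w i))
        (\sum_i c i *: pz1 (w i)) (\sum_i c i *: pz2 (w i))
        (\sum_i c i * pmu (w i))
        (\sum_i c i *: pdel1 (w i)) (\sum_i c i *: pdel2 (w i)).

Lemma split_R n (c : 'I_n.+1 -> R) (X : 'I_n.+1 -> R) : c ord0 != 1 ->
  \sum_i c i * X i = c ord0 * X ord0 +
     (1 - c ord0) * \sum_i (c (lift ord0 i) / (1 - c ord0)) * X (lift ord0 i).
Proof.
move=> h; have h' : 1 - c ord0 != 0 by rewrite subr_eq0 eq_sym.
rewrite big_ord_recl big_distrr; congr (_ + _); apply: eq_bigr => i _ /=.
by rewrite mulrA (mulrC (1 - _)) divfK.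
Qed.

Lemma split_V (V : lmodType R) n (c : 'I_n.+1 -> R) (X : 'I_n.+1 -> V) : c ord0 != 1 ->
  \sum_i c i *: X i = c ord0 *: X ord0 +
     (1 - c ord0) *: \sum_i (c (lift ord0 i) / (1 - c ord0)) *: X (lift ord0 i).
Proof.
move=> h; have h' : 1 - c ord0 != 0 by rewrite subr_eq0 eq_sym.
rewrite big_ord_recl scaler_sumr; congr (_ + _); apply: eq_bigr => i _ /=.
by rewrite scalerA (mulrC (1 - _)) divfK.
Qed.

Lemma one_R n (c : 'I_n.+1 -> R) (X : 'I_n.+1 -> R) : c ord0 = 1 ->
  (forall i, c (lift ord0 i) = 0) -> \sum_i c i * X i = X ord0.
Proof.
by move=> h0 hz; rewrite big_ord_recl big1 ?addr0 ?h0 ?mul1r // => i _; rewrite hz mul0r.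
Qed.

Lemma one_V (V : lmodType R) n (c : 'I_n.+1 -> R) (X : 'I_n.+1 -> V) : c ord0 = 1 ->
  (forall i, c (lift ord0 i) = 0) -> \sum_i c i *: X i = X ord0.
Proof.
by move=> h0 hz; rewrite big_ord_recl big1 ?addr0 ?h0 ?scale1r // => i _; rewrite hz scale0r.
Qed.

Lemma pcombo_split n (c : 'I_n.+1 -> R) (w : 'I_n.+1 -> pt) : c ord0 != 1 ->
  pcombo c w = pcomb (c ord0) (w ord0)
    (pcombo (fun i => c (lift ord0 i) / (1 - c ord0)) (fun i => w (lift ord0 i))).
Proof. by move=> h; rewrite /pcombo /pcomb /= !split_R // !split_V. Qed.

Lemma rest_zero n (c : 'I_n.+1 -> R) : (forall i, 0 <= c i) -> \sum_i c i = 1 ->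
  c ord0 = 1 -> forall i, c (lift ord0 i) = 0.
Proof.
move=> hc hs h0 i.
have e : \sum_i c (lift ord0 i) = 0 by move: hs; rewrite big_ord_recl h0; lra.
exact: (psumr_eq0P (fun j _ => hc (lift ord0 j)) e).
Qed.

Lemma pcombo_one n (c : 'I_n.+1 -> R) (w : 'I_n.+1 -> pt) :
  (forall i, 0 <= c i) -> \sum_i c i = 1 -> c ord0 = 1 -> pcombo c w = w ord0.
Proof.
move=> hc hs h0; have hz := rest_zero hc hs h0.
by rewrite /pcombo !one_R // !one_V //; case: (w ord0).
Qed.

Lemma pcomb0 (a b : pt) : pcomb 0 a b = b.
Proof.
by case: a; case: b => *; rewrite /pcomb /= !mul0r !scale0r !add0r !subr0 !scale1r !mul1r.
Qed.

Lemma pcomb1 (a b : pt) : pcomb 1 a b = a.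
Proof.
by case: a; case: b => *; rewrite /pcomb /= !subrr !scale0r !mul0r !addr0 !scale1r !mul1r.
Qed.

Lemma comb_same (V : lmodType R) (t : R) (x : V) : t *: x + (1 - t) *: x = x.
Proof. by rewrite -scalerDl addrC subrK scale1r. Qed.

Lemma comb_sameR (t x : R) : t * x + (1 - t) * x = x.
Proof. by ring. Qed.

Lemma pcomb_same (t : R) (a : pt) : pcomb t a a = a.
Proof. by case: a => *; rewrite /pcomb /= !comb_same !comb_sameR. Qed.

Lemma rest_facts n (c : 'I_n.+1 -> R) : (forall i, 0 <= c i) -> \sum_i c i = 1 ->
  c ord0 != 1 ->
  [/\ 0 <= c ord0 <= 1, 0 < 1 - c ord0,
      forall i, 0 <= c (lift ord0 i) / (1 - c ord0) &
      \sum_i c (lift ord0 i) / (1 - c ord0) = 1].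
Proof.
move=> hc hs h1.
have hr : \sum_i c (lift ord0 i) = 1 - c ord0.
  by move: hs; rewrite big_ord_recl; lra.
have hr0 : 0 <= \sum_i c (lift ord0 i) by apply: sumr_ge0.
have c1 : c ord0 <= 1 by move: hr0; rewrite hr subr_ge0.
have pos : 0 < 1 - c ord0.
  by rewrite lt_neqAle subr_ge0 c1 andbT eq_sym subr_eq0 eq_sym.
split.
- by rewrite hc c1.
- exact: pos.
- by move=> i; rewrite divr_ge0 // ltW.
- by rewrite -mulr_suml hr divff // gt_eqF.
Qed.

Lemma combo_in n (c : 'I_n -> R) (w : 'I_n -> pt) :
  (forall i, P (w i)) -> (forall i, 0 <= c i) -> \sum_i c i = 1 -> P (pcombo c w).
Proof.
elim: n c w => [|n IH] c w hw hc hs.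
  by move: hs; rewrite big_ord0 => /eqP; rewrite eq_sym oner_eq0.
case: (eqVneq (c ord0) 1) => h1; first by rewrite pcombo_one.
have [c01 _ hc' hs'] := rest_facts hc hs h1.
rewrite pcombo_split //; apply: P_conv => //.
exact: IH.
Qed.

Lemma extreme_combo (Q : pt -> Prop) n (c : 'I_n -> R) (w : 'I_n -> pt) v :
  extreme_point P v -> (forall i, P (w i) /\ Q (w i)) -> (forall i, 0 <= c i) ->
  \sum_i c i = 1 -> v = pcombo c w -> Q v.
Proof.
elim: n c w v => [|n IH] c w v hv hw hc hs ev.
  by move: hs; rewrite big_ord0 => /eqP; rewrite eq_sym oner_eq0.
case: (eqVneq (c ord0) 1) => h1.
  by rewrite ev pcombo_one //; case: (hw ord0).
have [c01 _ hc' hs'] := rest_facts hc hs h1.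
have PB := combo_in (fun i => (hw (lift ord0 i)).1) hc' hs'.
move: ev; rewrite pcombo_split // => ev.
case: (eqVneq (c ord0) 0) => h0.
  move: ev; rewrite (_ : forall a b, pcomb (c ord0) a b = b); last first.
    by move=> a b; rewrite h0 pcomb0.
  move=> ev.
  by apply: (IH _ _ _ hv _ hc' hs' ev) => i; apply: hw.
have e := hv.2 _ _ _ (hw ord0).1 PB.
have : 0 < c ord0 < 1.
  by case/andP: c01 => a b; rewrite lt_neqAle eq_sym h0 a lt_neqAle h1 b.
move=> /e /(_ ev) eab; move: ev; rewrite -eab pcomb_same => ->.
by case: (hw ord0).
Qed.

Definition sbm (a b : pt) := px1 a = px1 b /\ px2 a = px2 b /\ pz1 a = pz1 b /\ pz2 a = pz2 b /\ pdel1 a = pdel1 b /\ pdel2 a = pdel2 b.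

Lemma point_eq (a b : pt) : sbm a b -> pmu a = pmu b -> a = b.
Proof.
case: a => ? ? ? ? ? ? ?; case: b => ? ? ? ? ? ? ?; rewrite /sbm /=.
move=> [h1 [h2 [h3 [h4 [h5 h6]]]]] h7; congruence.
Qed.

Lemma Lmap_mono d (r : {perm 'I_d.+1}) (z' z : 'rV[R]_d) :
  Lmap r z' = z -> inDelta z -> forall j, zext z' j.+1 <= zext z' j.
Proof.
move=> L hz j; case: (leqP j d) => hj.
  rewrite -subr_ge0; have := lam_Lmap r z' (r (inord j)).
  rewrite permK inordK // => e; rewrite -[_ - _]/(lam z' j) -e L.
  by apply: lam_ge0 => //; apply: leq_ord.
by rewrite !zext_big // ltnW.
Qed.

Lemma decomp_gen (r1 : {perm 'I_d1.+1}) (r2 : {perm 'I_d2.+1}) (v : pt) z1' z2' :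
  P v -> Lmap r1 z1' = pz1 v -> Lmap r2 z2' = pz2 v ->
  exists pi n (c : 'I_n -> R) (a1 : 'I_n -> 'I_d1.+1) (a2 : 'I_n -> 'I_d2.+1),
  [/\ staircase d1 d2 pi, (forall i, 0 <= c i), \sum_i c i = 1,
      sbm (pcombo c (fun i => Wpt (a1 i) (a2 i))) v &
      stair_sum (psi f1 f2 p1 p2 r1 r2) z1' z2' pi =
        pmu (pcombo c (fun i => Wpt (a1 i) (a2 i)))].
Proof.
move=> hP L1 L2; have [[hB1 hB2] _ [he1 he2] _ _] := hP.
have m1 := Lmap_mono L1 hB1.2; have m2 := Lmap_mono L2 hB2.2.
have b1 : forall m, (d1 < m)%N -> zext z1' m = 0 by move=> m; apply: zext_big.
have b2 : forall m, (d2 < m)%N -> zext z2' m = 0 by move=> m; apply: zext_big.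
have [pi [st hs]] := sorted_stair m1 m2 b1 b2.
pose c := fun t : 'I_(size pi).+1 =>
  uu (zext z1') (zext z2') pi t - uu (zext z1') (zext z2') pi t.+1.
have hc : forall t, 0 <= c t.
  by move=> t; apply: (uu_nonneg m1 m2 b1 b2 (zext0 _) (zext0 _) hs).
have [s1c s2c] := st.
have D1 : forall m, zext z1' m =
    \sum_t c t * zext (vz (inord (jvec pi t).1 : 'I_d1.+1)) m.
  move=> m; rewrite (@Z_decomp1 _ (zext z1') (zext z2') pi d1 d2 st (zext0 _) b1 m).
  apply: eq_bigr => t _; rewrite zext_vz inordK // ltnS -s1c; exact: jvec_le1.
have D2 : forall m, zext z2' m =
    \sum_t c t * zext (vz (inord (jvec pi t).2 : 'I_d2.+1)) m.
  move=> m; rewrite (@Z_decomp2 _ (zext z1') (zext z2') pi d1 d2 st (zext0 _) b2 m).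
  apply: eq_bigr => t _; rewrite zext_vz inordK // ltnS -s2c; exact: jvec_le2.
have D1' := Lmap_decomp r1 D1; rewrite L1 in D1'.
have D2' := Lmap_decomp r2 D2; rewrite L2 in D2'.
exists pi, (size pi).+1, c, (fun t => r1 (inord (jvec pi t).1)),
  (fun t => r2 (inord (jvec pi t).2)); split => //.
- exact: csum1 D1'.
- rewrite /sbm /pcombo /=; split; first exact: x_decomp hB1 D1'.
  split; first exact: x_decomp hB2 D2'.
  split; first exact: row_decomp D1'.
  split; first exact: row_decomp D2'.
  split; first exact: del_decomp he1 D1'.
  exact: del_decomp he2 D2'.
- by rewrite stairE SS_abel /pcombo /=.
Qed.

Lemma Lmap_inv_vz d (r : {perm 'I_d.+1}) (z' : 'rV[R]_d) (a : 'I_d.+1) :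
  Lmap r z' = vz a -> z' = vz (r^-1 a)%g.
Proof.
move=> L; apply: zext_inj => m; rewrite !zext_lam; apply: eq_bigr => k _.
have := lam_Lmap r z' (r k); rewrite permK L => <-.
by rewrite !lam_vz !val_eqE -[k == _](inj_eq (@perm_inj _ r)) permKV.
Qed.

Lemma part1_bw (v : pt) : P v -> binary_row (pdel1 v) -> binary_row (pdel2 v) ->
  exists j1 j2, [/\ px1 v = p1 j1, px2 v = p2 j2 & pmu v = f1 (px1 v) * f2 (px2 v)].
Proof.
move=> hP bb1 bb2.
have [[hB1 hB2] _ [he1 he2] [y1 [y2 [L1 [L2 S1]]]] [w1 [w2 [M1 [M2 S2]]]]] := hP.
have [a1 [ez1 _]] := enc_bin heta1 hB1.2 he1 bb1.
have [a2 [ez2 _]] := enc_bin heta2 hB2.2 he2 bb2.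
have ex1 : px1 v = p1 a1.
  by have [e _] := inB_vz p1 a1; case: hB1 => -> _; rewrite ez1 -e.
have ex2 : px2 v = p2 a2.
  by have [e _] := inB_vz p2 a2; case: hB2 => -> _; rewrite ez2 -e.
exists a1, a2; split => //; rewrite ex1 ex2.
rewrite ez1 in L1 M1; rewrite ez2 in L2 M2.
rewrite (Lmap_inv_vz L1) (Lmap_inv_vz L2) in S1.
rewrite (Lmap_inv_vz M1) (Lmap_inv_vz M2) in S2.
apply/le_anti/andP; split.
- have [pi [st e]] := vertex_exact (psi f1 f2 p1 p2 s1 s2)
     (leq_ord (s1^-1 a1)%g) (leq_ord (s2^-1 a2)%g).
  have := S1 pi st; rewrite stairE (SS_ext _ _ (zext_vz R _) (zext_vz R _)) e.
  by rewrite /psi /= !inord_val !permKV.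
- have [pi [st e]] := vertex_exact (psi f1 f2 p1 p2 t1 t2)
     (leq_ord (t1^-1 a1)%g) (leq_ord (t2^-1 a2)%g).
  have := S2 pi st; rewrite stairE (SS_ext _ _ (zext_vz R _) (zext_vz R _)) e.
  by rewrite /psi /= !inord_val !permKV.
Qed.

Lemma ideal (v : pt) : extreme_point P v ->
  binary_row (pdel1 v) /\ binary_row (pdel2 v).
Proof.
move=> hv; have hP := hv.1.
have [_ _ _ [y1 [y2 [L1 [L2 S1]]]] [w1 [w2 [M1 [M2 S2]]]]] := hP.
have [pi [n [c [a1 [a2 [st hc hs hsbm hst]]]]]] := decomp_gen hP L1 L2.
have [pi' [n' [c' [a1' [a2' [st' hc' hs' hsbm' hst']]]]]] := decomp_gen hP M1 M2.
set A := pcombo c _ in hsbm hst; set B := pcombo c' _ in hsbm' hst'.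
have muA : pmu v <= pmu A by rewrite -hst; apply: S1.
have muB : pmu B <= pmu v by rewrite -hst'; apply: S2.
have PA : P A by apply: combo_in => // i; apply: P_W.
have PB : P B by apply: combo_in => // i; apply: P_W.
have defA : A = pcombo c (fun i => Wpt (a1 i) (a2 i)) by [].
have defB : B = pcombo c' (fun i => Wpt (a1' i) (a2' i)) by [].
clearbody A B.
have QW : forall (m : nat) (a : 'I_m -> 'I_d1.+1) (b : 'I_m -> 'I_d2.+1) i,
    P (Wpt (a i) (b i)) /\ (binary_row (pdel1 (Wpt (a i) (b i))) /\
                           binary_row (pdel2 (Wpt (a i) (b i)))).
  by move=> m a b i; split; [apply: P_W | apply: bin_W].
suff [eA|eB] : v = A \/ v = B.
- exact: (extreme_combo (Q := fun u => binary_row (pdel1 u) /\ binary_row (pdel2 u))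
            hv (QW _ a1 a2) hc hs (etrans eA defA)).
- exact: (extreme_combo (Q := fun u => binary_row (pdel1 u) /\ binary_row (pdel2 u))
            hv (QW _ a1' a2') hc' hs' (etrans eB defB)).
move: hsbm hsbm'; rewrite /sbm => [[eA1 [eA2 [eA3 [eA4 [eA5 eA6]]]]] [eB1 [eB2 [eB3 [eB4 [eB5 eB6]]]]]].
case: (eqVneq (pmu A) (pmu B)) => eAB.
  left; apply: point_eq; first by rewrite /sbm; rewrite eA1 eA2 eA3 eA4 eA5 eA6.
  by apply/le_anti; rewrite muA eAB muB.
have lt : pmu B < pmu A by rewrite lt_neqAle eq_sym eAB (le_trans muB muA).
have pos : 0 < pmu A - pmu B by rewrite subr_gt0.
set al := (pmu v - pmu B) / (pmu A - pmu B).
have ev : v = pcomb al A B.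

  symmetry; apply: point_eq; rewrite /sbm /pcomb /=.
    by rewrite eA1 eA2 eA3 eA4 eA5 eA6 eB1 eB2 eB3 eB4 eB5 eB6 !comb_same !comb_sameR.
  by rewrite /al; field; rewrite subr_eq0.
have al0 : 0 <= al.
  by rewrite /al; apply: divr_ge0; rewrite subr_ge0 //; apply: ltW.
have al1 : al <= 1 by rewrite /al ler_pdivrMr // mul1r lerD2r.
case: (eqVneq al 0) => h0.
  by right; rewrite ev h0 pcomb0.
case: (eqVneq al 1) => h1.
  by left; rewrite ev h1 pcomb1.
have hal : 0 < al < 1 by rewrite !lt_neqAle eq_sym h0 al0 h1 al1.
have eAB' := hv.2 A B al PA PB hal ev.
by left; rewrite ev -eAB' pcomb_same.
Qed.

End E.

Theorem corollary1 (R : realType) (d1 d2 : nat)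
  (hd1 : (1 <= d1)%N) (hd2 : (1 <= d2)%N)
  (p1 : 'I_d1.+1 -> R) (p2 : 'I_d2.+1 -> R)
  (hp1 : forall j k : 'I_d1.+1, (j < k)%N -> p1 j < p1 k)
  (hp2 : forall j k : 'I_d2.+1, (j < k)%N -> p2 j < p2 k)
  (f1 f2 : R -> R)
  (s1 t1 : {perm 'I_d1.+1}) (s2 t2 : {perm 'I_d2.+1})
  (hs1 : forall j k : 'I_d1.+1, (j <= k)%N -> f1 (p1 (s1 j)) <= f1 (p1 (s1 k)))
  (hs2 : forall j k : 'I_d2.+1, (j <= k)%N -> f2 (p2 (s2 j)) <= f2 (p2 (s2 k)))
  (ht1 : forall j k : 'I_d1.+1, (j <= k)%N -> f1 (p1 (t1 j)) <= f1 (p1 (t1 k)))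
  (ht2 : forall j k : 'I_d2.+1, (j <= k)%N -> f2 (p2 (t2 j)) >= f2 (p2 (t2 k)))
  (eta1 : 'I_d1.+1 -> 'I_(up_log 2 d1.+1) -> bool)
  (eta2 : 'I_d2.+1 -> 'I_(up_log 2 d2.+1) -> bool)
  (heta1 : forall t t' : 'I_d1.+1, (forall k, eta1 t k = eta1 t' k) -> t = t')
  (heta2 : forall t t' : 'I_d2.+1, (forall k, eta2 t k = eta2 t' k) -> t = t') :
  let P := relaxation p1 p2 f1 f2 s1 s2 t1 t2 eta1 eta2 in
  (forall x1 x2 mu : R,
     (exists (j1 : 'I_d1.+1) (j2 : 'I_d2.+1),
        [/\ x1 = p1 j1, x2 = p2 j2 & mu = f1 x1 * f2 x2])
     <->
     (exists v, [/\ P v, binary_row (pdel1 v) /\ binary_row (pdel2 v),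
                    px1 v = x1, px2 v = x2 & pmu v = mu]))
  /\
  (forall v, extreme_point P v -> binary_row (pdel1 v) /\ binary_row (pdel2 v)).
Proof.
move=> P; split.
  move=> x1 x2 mu; split.
    case=> j1 [j2 [-> -> ->]].
    exists (Wpt p1 p2 f1 f2 eta1 eta2 j1 j2); split => //.
    - exact: (P_W eta1 eta2 hs1 hs2 ht1 ht2).
    - exact: bin_W.
  case=> v [hP [bb1 bb2] <- <- <-].
  exact: (part1_bw heta1 heta2 hP bb1 bb2).
move=> v hv; exact: (ideal hs1 hs2 ht1 ht2 hv).
Qed.
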